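(* Let $k$ be a field and let $A$ be a just infinite $k$-algebra which is countably generated as a $k$-algebra and does not satisfy a polynomial identity. Then the extended center $C(A)$ of $A$ is a field extension of $k$ of countable dimension over $k$.
   Context: All rings are associative unital algebras over a field. A $k$-algebra $A$ is called just infinite if $\dim_k(A)=\infty$ and every nonzero two-sided ideal of $A$ has finite codimension in $A$; just infinite algebras are prime. For a prime ring $A$, the (right) Martindale ring of quotients $Q_r(A)$ consists of equivalence classes of pairs $(I,f)$ where $I$ is a nonzero two-sided ideal of $A$ and $f\colon I\to A$ is a right $A$-module homomorphism, two pairs being equivalent if the maps agree on the intersection of their domains; addition is $(I,f)+(J,g)=(I\cap J,f+g)$ and multiplication $(I,f)(J,g)=(JI,f\circ g)$. The extended center $C(A)$ is the center of $Q_r(A)$ (equivalently, classes of pairs $(I,f)$ with $f$ an $(A,A)$-bimodule map); it is a field extension of $k$. *)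

(* Defs.v *)
From HB Require Import structures.
From mathcomp Require Import all_boot all_algebra.
Set Implicit Arguments. Unset Strict Implicit. Unset Printing Implicit Defensive.
Import GRing.Theory.
Local Open Scope ring_scope.

Section Defs.
Variables (k : fieldType) (A : algType k).

Definition in_span (s : seq A) (a : A) : Prop :=
  exists c : nat -> k, a = \sum_(i < size s) c i *: s`_i.

Definition finite_dimensional : Prop := exists s : seq A, forall a, in_span s a.

Definition is_ideal (I : A -> Prop) : Prop :=
  [/\ I 0, (forall x y, I x -> I y -> I (x + y)),
      (forall a x, I x -> I (a * x)) & (forall a x, I x -> I (x * a))].

Definition nonzero_set (I : A -> Prop) : Prop := exists x, I x /\ x != 0.

Definition finite_codim (I : A -> Prop) : Prop :=
  exists s : seq A, forall a, exists y, I y /\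
    exists c : nat -> k, a = y + \sum_(i < size s) c i *: s`_i.

Definition just_infinite : Prop :=
  ~ finite_dimensional /\
  forall I, is_ideal I -> nonzero_set I -> finite_codim I.

Definition is_subalgebra (S : A -> Prop) : Prop :=
  [/\ S 1, (forall x y, S x -> S y -> S (x + y)),
      (forall x y, S x -> S y -> S (x * y)) & (forall c x, S x -> S (c *: x))].

Definition countably_generated : Prop :=
  exists g : nat -> A, forall S, is_subalgebra S -> (forall n, S (g n)) ->
    forall a, S a.

(* evaluation of the monomial x_{w_0} x_{w_1} ... at x_i := a i *)
Definition eval_word (a : nat -> A) (w : seq nat) : A := \prod_(i <- w) a i.

(* A satisfies a polynomial identity: a nonzero element
   sum_{w in ws} c(w) w of the free algebra k<x_0, x_1, ...>
   (ws a duplicate-free list of words) vanishing on all substitutions *)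
Definition satisfies_PI : Prop :=
  exists (ws : seq (seq nat)) (c : seq nat -> k),
    [/\ uniq ws, (exists2 w, w \in ws & c w != 0) &
        forall a : nat -> A, \sum_(w <- ws) c w *: eval_word a w = 0].

(* (I, f) represents an element of the extended center C(A):
   I a nonzero two-sided ideal, f : I -> A an (A,A)-bimodule map
   (only the values of f on I matter) *)
Definition central_pair (I : A -> Prop) (f : A -> A) : Prop :=
  [/\ is_ideal I, nonzero_set I,
      (forall x y, I x -> I y -> f (x + y) = f x + f y),
      (forall a x, I x -> f (a * x) = a * f x) &
      (forall a x, I x -> f (x * a) = f x * a)].

(* C(A) has countable dimension over k: there is a sequence of elements
   (J n, g n) of C(A) such that every element (I, f) of C(A) is equivalent
   (agrees on the intersection of domains) to a finite k-linear combination
   sum_{j<m} c_j (J j, g j) (whose domain is the intersection of the J j). *)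
Definition extended_center_countable_dim : Prop :=
  exists (J : nat -> A -> Prop) (g : nat -> A -> A),
    (forall n, central_pair (J n) (g n)) /\
    forall I f, central_pair I f ->
      exists (m : nat) (c : nat -> k), forall x, I x ->
        (forall j, (j < m)%N -> J j x) ->
        f x = \sum_(j < m) c j *: g j x.

End Defs.

(* Main.v *)
Require Import Defs.
From HB Require Import structures.
From mathcomp Require Import all_boot all_algebra.
From Stdlib Require Import Classical IndefiniteDescription.
From mathcomp Require Import all_fingroup.
Set Implicit Arguments. Unset Strict Implicit. Unset Printing Implicit Defensive.
Import GRing.Theory.
Local Open Scope ring_scope.

Section S.
Variables (k : fieldType) (A : algType k).

Lemma sum_delta (n t : nat) (F : nat -> A) : (t < n)%N ->
  \sum_(i < n) (i == t :> nat)%:R *: F i = F t.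
Proof.
move=> ht; rewrite (bigD1 (Ordinal ht)) //= eqxx scale1r big1 ?addr0 //.
move=> i /eqP hi; have -> : (i == t :> nat) = false.
  by apply/eqP => e; apply: hi; apply: val_inj.
by rewrite scale0r.
Qed.

Lemma span0 s : in_span s (0 : A).
Proof. by exists (fun _ => 0); rewrite big1 // => i _; rewrite scale0r. Qed.

Lemma spanD s (x y : A) : in_span s x -> in_span s y -> in_span s (x + y).
Proof.
move=> [c ->] [d ->]; exists (fun i => c i + d i).
by rewrite -big_split; apply: eq_bigr => i _; rewrite scalerDl.
Qed.

Lemma spanZ s r (x : A) : in_span s x -> in_span s (r *: x).
Proof.
move=> [c ->]; exists (fun i => r * c i).
by rewrite scaler_sumr; apply: eq_bigr => i _; rewrite scalerA.
Qed.

Lemma span_mem s (x : A) : x \in s -> in_span s x.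
Proof.
move=> hx; exists (fun i => (i == index x s)%:R).
by rewrite sum_delta ?index_mem // nth_index.
Qed.

Lemma span_sum s I r (P : pred I) (F : I -> A) :
  (forall i, P i -> in_span s (F i)) -> in_span s (\sum_(i <- r | P i) F i).
Proof.
move=> h; apply: (big_ind (in_span s)); [exact: span0| exact: spanD | exact: h].
Qed.

Lemma span_trans s t (a : A) : in_span s a -> (forall x, x \in s -> in_span t x) ->
  in_span t a.
Proof.
move=> [c ->] h; apply: span_sum => i _; apply: spanZ; apply: h; exact: mem_nth.
Qed.

Lemma span_catl s t (a : A) : in_span s a -> in_span (s ++ t) a.
Proof. by move=> h; apply: (span_trans h) => x hx; apply: span_mem; rewrite mem_cat hx. Qed.
Lemma span_catr s t (a : A) : in_span t a -> in_span (s ++ t) a.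
Proof. by move=> h; apply: (span_trans h) => x hx; apply: span_mem; rewrite mem_cat hx orbT. Qed.

End S.


Section S.
Variables (k : fieldType) (A : algType k).

Definition genI (v : A) (x : A) : Prop :=
  exists r : seq (A * A), x = \sum_(p <- r) p.1 * v * p.2.

Lemma genI_ideal v : is_ideal (genI v).
Proof.
split.
- by exists [::]; rewrite big_nil.
- by move=> x y [r ->] [r' ->]; exists (r ++ r'); rewrite big_cat.
- move=> a x [r ->]; exists [seq (a * p.1, p.2) | p <- r].
  by rewrite big_map mulr_sumr; apply: eq_bigr => p _ /=; rewrite !mulrA.
- move=> a x [r ->]; exists [seq (p.1, p.2 * a) | p <- r].
  by rewrite big_map mulr_suml; apply: eq_bigr => p _ /=; rewrite !mulrA.
Qed.

Lemma genI_self v : genI v v.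
Proof. by exists [:: (1, 1)]; rewrite big_seq1 /= mul1r mulr1. Qed.

Lemma ideal_sum (I : A -> Prop) (T : Type) (r : seq T) (F : T -> A) :
  is_ideal I -> (forall i, I (F i)) -> I (\sum_(i <- r) F i).
Proof.
move=> [h0 hD _ _] h; apply: (big_ind I) => //.
Qed.

Lemma ideal_scale (I : A -> Prop) c x : is_ideal I -> I x -> I (c *: x).
Proof. by move=> [_ _ hl _] hx; rewrite -mulr_algl; apply: hl. Qed.

Lemma genI_annl (v : A) (P : A -> Prop) :
  (forall a, P a -> forall b, P (a * b)) ->
  (forall y, P y -> y * v = 0) -> forall x, genI v x -> forall y, P y -> y * x = 0.
Proof.
move=> hP h x [r ->] y hy; rewrite mulr_sumr big1 // => p _.
by rewrite !mulrA h ?mul0r //; apply: hP.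
Qed.

Lemma genI_annr (v : A) (P : A -> Prop) :
  (forall a, P a -> forall b, P (b * a)) ->
  (forall y, P y -> v * y = 0) -> forall x, genI v x -> forall y, P y -> x * y = 0.
Proof.
move=> hP h x [r ->] y hy; rewrite mulr_suml big1 // => p _.
by rewrite -!mulrA h ?mulr0 //; apply: hP.
Qed.

Lemma fin_dim_of (x : A) (P Q : A -> Prop) :
  just_infinite A -> is_ideal P -> nonzero_set P -> is_ideal Q -> nonzero_set Q ->
  x != 0 -> (forall y, P y -> y * x = 0) -> (forall y, Q y -> x * y = 0) -> False.
Proof.
move=> [nfd hji] iP nP iQ nQ nx hPx hxQ.
have [s hs] := hji P iP nP.
have [t ht] := hji Q iQ nQ.
have [u hu] := hji (genI x) (genI_ideal x) (ex_intro _ x (conj (genI_self x) nx)).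
pose L := [seq a * x * b | a <- s, b <- t].
have hab a b : in_span L (a * x * b).
  have [p [Pp [c ->]]] := hs a; have [q [Qq [d ->]]] := ht b.
  set S := \sum_(i < size s) _; set T := \sum_(i < size t) _.
  have -> : (p + S) * x * (q + T) = S * x * T.
    by rewrite mulrDl hPx // add0r mulrDr -(mulrA S x q) hxQ // mulr0 add0r.
  rewrite /S mulr_suml mulr_suml; apply: span_sum => i _.
  rewrite -!scalerAl; apply: spanZ; rewrite /T mulr_sumr; apply: span_sum => j _.
  rewrite -scalerAr; apply: spanZ; apply: span_mem.
  by apply: allpairs_f; apply: mem_nth.
apply: nfd; exists (L ++ u) => a.
have [y [[r ->] [e ->]]] := hu a.
apply: spanD; first by apply: span_catl; apply: span_sum => p _; apply: hab.
by apply: span_catr; exists e.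
Qed.

Lemma prime_elt (u v : A) : just_infinite A -> u != 0 -> v != 0 ->
  exists a, u * a * v != 0.
Proof.
move=> ji nu nv; apply/not_all_not_ex => h.
have h0 a : u * a * v = 0 by case: (eqVneq (u * a * v) 0) => // H; case: (h a H).
have iU := genI_ideal u; have iV := genI_ideal v.
have nU : nonzero_set (genI u) by exists u; split => //; apply: genI_self.
have nV : nonzero_set (genI v) by exists v; split => //; apply: genI_self.
have Uv : forall y, genI u y -> y * v = 0.
  move=> y [r ->]; rewrite mulr_suml big1 // => p _; by rewrite -!mulrA (mulrA u) h0 mulr0.
case: (classic (exists a, v * a * u != 0)) => [[a hva]|hn].
- apply: (fin_dim_of ji iU nU iV nV hva).
  + by move=> y hy; rewrite !mulrA Uv // !mul0r.
  + move=> y [r ->]; rewrite mulr_sumr big1 // => p _.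
    rewrite (_ : v * a * u * (p.1 * v * p.2) = v * a * (u * p.1 * v) * p.2).
      by rewrite h0 mulr0 mul0r.
    by rewrite !mulrA.
- have hn' a : v * a * u = 0.
    by case: (eqVneq (v * a * u) 0) => // H; case: hn; exists a.
  apply: (fin_dim_of ji iU nU iU nU nv Uv).
  move=> y [r ->]; rewrite mulr_sumr big1 // => p _.
  by rewrite !mulrA hn' !mul0r.
Qed.
End S.

Section S.
Variables (k : fieldType) (A : algType k).

Definition alt m (x : 'I_m -> A) : A :=
  \sum_(s : 'S_m) ((-1) ^+ odd_perm s : k) *: \prod_(i < m) x (s i).

Definition upd m (x : 'I_m -> A) (j : 'I_m) (v : A) : 'I_m -> A :=
  fun i => if i == j then v else x i.

Lemma alt_ext m (x y : 'I_m -> A) : x =1 y -> alt x = alt y.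
Proof.
by move=> h; apply: eq_bigr => s _; congr (_ *: _); apply: eq_bigr => i _.
Qed.

Lemma alt_alternate m (x : 'I_m -> A) i1 i2 : i1 != i2 -> x i1 = x i2 -> alt x = 0.
Proof.
move=> neq12 eqx; pose t := tperm i1 i2.
have oddMt s : odd_perm (s * t)%g = ~~ odd_perm s.
  by rewrite odd_permM odd_tperm neq12 addbT.
rewrite /alt (bigID (fun s : 'S_m => odd_perm s)) /=.
apply: canLR (subrK _) _; rewrite add0r -sumrN.
rewrite (reindex_inj (mulIg t)); apply: eq_big => //= s.
rewrite oddMt => /negPf->; rewrite expr1 expr0 scaleN1r scale1r; congr (- _).
apply: eq_bigr => i _; rewrite permM /t.
by case: tpermP => // ->.
Qed.

Lemma prod_lin (I : eqType) (r : seq I) (i0 : I) (F : I -> A) (u v : A) c :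
  uniq r -> i0 \in r ->
  \prod_(i <- r) (if i == i0 then c *: u + v else F i) =
  c *: \prod_(i <- r) (if i == i0 then u else F i) +
  \prod_(i <- r) (if i == i0 then v else F i).
Proof.
elim: r => // a r IH /= /andP [nar ur]; rewrite in_cons => /orP [/eqP ea | ir].
  subst a; rewrite !big_cons eqxx.
  have e w : \prod_(i <- r) (if i == i0 then w else F i) = \prod_(i <- r) F i.
    rewrite big_seq_cond [RHS]big_seq_cond; apply: eq_bigr => i /andP [ir _].
    by case: eqP => // ei; subst i; rewrite ir in nar.
  by rewrite !e mulrDl scalerAl.
rewrite !big_cons IH //; case: eqP => [ea|_].
  by subst a; rewrite ir in nar.
by rewrite mulrDr scalerAr.
Qed.

Lemma alt_lin m (x : 'I_m -> A) j c u v :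
  alt (upd x j (c *: u + v)) = c *: alt (upd x j u) + alt (upd x j v).
Proof.
rewrite /alt scaler_sumr -big_split; apply: eq_bigr => s _ /=.
have e w : \prod_(i < m) upd x j w (s i) =
    \prod_(i < m) (if i == (s^-1)%g j then w else x (s i)).
  apply: eq_bigr => i _; rewrite /upd.
  have -> : (s i == j) = (i == (s^-1)%g j).
    by apply/eqP/eqP => [<-|->]; rewrite ?permK ?permKV.
  by [].
rewrite !e prod_lin ?index_enum_uniq ?mem_index_enum //.
by rewrite scalerDr !scalerA mulrC.
Qed.


Lemma prod_ideal (I : A -> Prop) (T : eqType) (r : seq T) (F : T -> A) i0 :
  is_ideal I -> i0 \in r -> I (F i0) -> I (\prod_(i <- r) F i).
Proof.
move=> [_ _ hl hr]; elim: r => // a r IH; rewrite in_cons big_cons.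
case/orP => [/eqP -> h|ir h]; first by apply: hr.
by apply: hl; apply: IH.
Qed.

Lemma alt_ideal (I : A -> Prop) m (x : 'I_m -> A) j :
  is_ideal I -> I (x j) -> I (alt x).
Proof.
move=> iI hj; rewrite /alt; apply: (big_ind I).
- by case: iI.
- by case: iI.
move=> s _; apply: ideal_scale => //.
apply: (prod_ideal (i0 := (s^-1)%g j)) => //.
by rewrite permKV.
Qed.

Lemma alt_codim (I : A -> Prop) (s : seq A) m (x : 'I_m -> A) :
  is_ideal I ->
  (forall a, exists y, I y /\ exists c : nat -> k, a = y + \sum_(i < size s) c i *: s`_i) ->
  (size s < m)%N -> I (alt x).
Proof.
move=> iI hcod hm.
suff H : forall j, (j <= m)%N -> forall x : 'I_m -> A,
    (forall i : 'I_m, (j <= i)%N -> exists t : 'I_(size s), x i = s`_t) -> I (alt x).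
  by apply: (H m) => // i; rewrite leqNgt ltn_ord.
elim => [_ {}x hx | j IH hj {}x hx].
  have ht : forall i, exists t : 'I_(size s), x i == s`_t.
    by move=> i; have [t e] := hx i (leq0n _); exists t; rewrite e.
  pose f i := xchoose (ht i).
  have hf i : x i = s`_(f i) by apply/eqP; apply: (xchooseP (ht i)).
  case: (injectiveP f) => [finj|].
    by have := leq_card f finj; rewrite !card_ord leqNgt hm.
  move=> ninj; case: (classic (exists i1 i2, f i1 = f i2 /\ i1 != i2)).
    move=> [i1 [i2 [e n]]]; rewrite (alt_alternate n); first by case: iI.
    by rewrite !hf e.
  move=> hn; case: ninj => i1 i2 e; apply/eqP; apply: contraT => n.
  by case: hn; exists i1, i2.
have jm : (j < m)%N by [].
pose jj := Ordinal jm.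
have [y [Iy [c ec]]] := hcod (x jj).
pose Q u := I (alt (upd x jj u)).
suff Qx : Q (x jj).
  by rewrite /Q (alt_ext (y := x)) // in Qx => i; rewrite /upd; case: eqP => // ->.
have [_ hD _ _] := iI.
have Q0 : Q 0 by apply: (alt_ideal (j := jj)) => //; rewrite /upd eqxx; case: iI.
have QD u v : Q u -> Q v -> Q (u + v).
  by move=> hu hv; rewrite /Q -[u]scale1r alt_lin scale1r; apply: hD.
have QZ c' u : Q u -> Q (c' *: u).
  move=> hu; rewrite /Q -[c' *: u]addr0 alt_lin; apply: hD => //.
  exact: ideal_scale.
rewrite ec; apply: (QD).
  by apply: (alt_ideal (j := jj)) => //; rewrite /upd eqxx.
apply: (big_ind Q); [exact: Q0 | move=> u v hu hv; exact: QD hu hv | move=> t _]. apply: QZ; apply: IH; first exact: ltnW.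
move=> i hi; rewrite /upd; case: eqP => [_|ne]; first by exists t.
apply: hx; rewrite leq_eqVlt in hi; case/orP: hi => // /eqP e.
by case: ne; apply: val_inj.
Qed.
End S.

Section S.
Variables (k : fieldType) (A : algType k).

Definition wd m (s : 'S_m) : seq nat := [seq val (s i) | i <- index_enum 'I_m].

Lemma wd_inj m : injective (@wd m).
Proof.
move=> s t e; apply/permP => i; apply: val_inj.
have := (eq_in_map (fun i => val (s i)) (fun i => val (t i)) (index_enum 'I_m)).2 e.
by move=> h; apply: h; apply: mem_index_enum.
Qed.

Lemma nonPI_alt m : ~ satisfies_PI A -> exists a : nat -> A, alt (fun i : 'I_m => a (val i)) != 0.
Proof.
move=> nPI; apply: NNPP => hn; apply: nPI.
pose c (w : seq nat) : k := if [pick s : 'S_m | wd s == w] is Some s then (-1) ^+ odd_perm s else 0.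
have hc (s : 'S_m) : c (wd s) = (-1) ^+ odd_perm s.
  rewrite /c; case: pickP => [s' /eqP e|h]; first by rewrite (wd_inj e).
  by have := h s; rewrite eqxx.
exists [seq wd s | s <- index_enum 'S_m], c; split.
- by rewrite map_inj_uniq ?index_enum_uniq //; apply: wd_inj.
- exists (wd (1%g : 'S_m)); first by apply: map_f; apply: mem_index_enum.
  by rewrite hc odd_perm1 expr0 oner_neq0.
- move=> a; rewrite big_map.
  have : alt (fun i : 'I_m => a (val i)) = 0.
    by case: (eqVneq (alt (fun i : 'I_m => a (val i))) 0) => // H; case: hn; exists a.
  move=> e; rewrite -[X in _ = X]e /alt; apply: eq_bigr => s _; rewrite hc; congr (_ *: _).
  by rewrite /eval_word /wd big_map.
Qed.
End S.

Section S.
Variables (k : fieldType) (A : algType k).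

Definition spanb (b : nat -> A) N (y : A) :=
  exists c : nat -> k, y = \sum_(i < N) c i *: b i.

Lemma spanb_widen (b : nat -> A) N M y : (N <= M)%N -> spanb b N y -> spanb b M y.
Proof.
move=> hNM [c ->]; exists (fun i => if (i < N)%N then c i else 0).
rewrite (big_ord_widen _ (fun i => c i *: b i) hNM) big_mkcond.
by apply: eq_bigr => i _; case: ifP => //; rewrite scale0r.
Qed.

Lemma spanbD b N (x y : A) : spanb b N x -> spanb b N y -> spanb b N (x + y).
Proof.
move=> [c ->] [d ->]; exists (fun i => c i + d i).
by rewrite -big_split; apply: eq_bigr => i _; rewrite scalerDl.
Qed.

Lemma spanbZ b N r (x : A) : spanb b N x -> spanb b N (r *: x).
Proof.
move=> [c ->]; exists (fun i => r * c i).
by rewrite scaler_sumr; apply: eq_bigr => i _; rewrite scalerA.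
Qed.

Definition Sb (b : nat -> A) (a : A) := exists N, spanb b N a.

Lemma SbD b x y : Sb b x -> Sb b y -> Sb b (x + y).
Proof.
move=> [N hx] [M hy]; exists (maxn N M); apply: spanbD.
  by apply: spanb_widen hx; apply: leq_maxl.
by apply: spanb_widen hy; apply: leq_maxr.
Qed.

Lemma SbZ b r x : Sb b x -> Sb b (r *: x).
Proof. by move=> [N h]; exists N; apply: spanbZ. Qed.

Lemma Sb_b b t : Sb b (b t).
Proof.
exists t.+1; exists (fun i => (i == t)%:R).
by rewrite sum_delta.
Qed.

Lemma Sb0 b : Sb b 0.
Proof. by exists 0%N, (fun _ => 0); rewrite big_ord0. Qed.

Lemma Sb_sum b (T : Type) (r : seq T) (F : T -> A) :
  (forall i, Sb b (F i)) -> Sb b (\sum_(i <- r) F i).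
Proof.
move=> h; apply: (big_ind (Sb b)); [exact: Sb0 | move=> x y; exact: SbD | by move=> i _].
Qed.

Definition wdec (j : nat) : seq nat := odflt [::] (unpickle j).

Lemma all_Sb (gen : nat -> A) :
  (forall S, is_subalgebra S -> (forall n, S (gen n)) -> forall a, S a) ->
  forall a, Sb (fun j => eval_word gen (wdec j)) a.
Proof.
move=> hg; set b := fun j => _.
have hb w : b (pickle w) = eval_word gen w by rewrite /b /wdec pickleK.
apply: hg; last first.
  move=> n; have <- : b (pickle [:: n]) = gen n by rewrite hb /eval_word big_seq1.
  exact: Sb_b.
split.
- have <- : b (pickle ([::] : seq nat)) = 1 by rewrite hb /eval_word big_nil.
  exact: Sb_b.
- exact: SbD.
- move=> x y [N [c ->]] [M [d ->]].
  rewrite mulr_suml; apply: Sb_sum => i; rewrite mulr_sumr; apply: Sb_sum => j.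
  rewrite -scalerAl -scalerAr scalerA; apply: SbZ.
  have <- : b (pickle (wdec i ++ wdec j)) = b i * b j by rewrite hb /eval_word big_cat.
  exact: Sb_b.
- move=> r x; exact: SbZ.
Qed.

Lemma central_zero (I : A -> Prop) f z : just_infinite A -> central_pair I f ->
  I z -> z != 0 -> f z = 0 -> forall x, I x -> f x = 0.
Proof.
move=> ji [[_ _ hl hr] _ _ fl fr] Iz nz fz x Ix.
case: (eqVneq (f x) 0) => // nfx; exfalso.
have [a ha] := prime_elt ji nfx nz.
have : f x * a * z = 0.
  rewrite -mulrA -fr //  (mulrA x a z) fl ?fz ?mulr0 //.
by move/eqP; rewrite (negbTE ha).
Qed.

Lemma central_comb (I J : A -> Prop) f g z r : central_pair I f -> central_pair J g ->
  I z -> J z -> z != 0 ->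
  central_pair (fun x => I x /\ J x) (fun x => f x - r *: g x).
Proof.
move=> [[I0 ID Il Ir] _ fD fl fr] [[J0 JD Jl Jr] _ gD gl gr] Iz Jz nz; split.
- split => //.
  + by move=> x y [? ?] [? ?]; split; [apply: ID|apply: JD].
  + by move=> a x [? ?]; split; [apply: Il|apply: Jl].
  + by move=> a x [? ?]; split; [apply: Ir|apply: Jr].
- by exists z.
- move=> x y [? ?] [? ?]; rewrite fD // gD // scalerDr; by rewrite opprD addrACA.
- by move=> a x [? ?]; rewrite fl // gl // mulrBr scalerAr.
- by move=> a x [? ?]; rewrite fr // gr // mulrBl scalerAl.
Qed.
End S.

Lemma choice_fun (T U : Type) (R : T -> U -> Prop) :
  (forall t, exists u, R t u) -> exists f, forall t, R t (f t).
Proof.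
move=> h; exists (fun t => proj1_sig (constructive_indefinite_description _ (h t))).
move=> t; exact: proj2_sig.
Qed.

Section S.
Variables (k : fieldType) (A : algType k).

Definition Pgood (b : nat -> A) (z0 : A) (i : nat) (q : (A -> Prop) * (A -> A)) :=
  [/\ q.1 z0, spanb b i.+1 (q.2 z0) & ~ spanb b i (q.2 z0)].

Lemma ech (b : nat -> A) (z0 : A) (p : nat -> (A -> Prop) * (A -> A)) :
  just_infinite A -> z0 != 0 ->
  (forall i, central_pair (p i).1 (p i).2 /\
     ((exists q, central_pair q.1 q.2 /\ Pgood b z0 i q) -> Pgood b z0 i (p i))) ->
  forall N I f, central_pair I f -> I z0 -> spanb b N (f z0) ->
  exists d : nat -> k, forall x, I x -> (forall i, (i < N)%N -> (p i).1 x) ->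
     f x = \sum_(i < N) d i *: (p i).2 x.
Proof.
move=> ji nz hp; elim => [|N IH] I f cf Iz hs.
  exists (fun _ => 0) => x Ix _; rewrite big_ord0.
  apply: (central_zero ji cf Iz nz) => //.
  by case: hs => c ->; rewrite big_ord0.
case: (classic (spanb b N (f z0))) => [hN|hN].
  have [d hd] := IH I f cf Iz hN.
  exists (fun i => if (i < N)%N then d i else 0) => x Ix hx.
  rewrite big_ord_recr /= ltnn scale0r addr0 hd //; last by move=> i hi; apply: hx; apply: ltnW.
  by apply: eq_bigr => i _; rewrite ltn_ord.
have [cp hpN] := hp N.
have [Jz [c' hc'] nsp] := hpN (ex_intro _ (I, f) (conj cf (And3 Iz hs hN))).
have [c hc] := hs.
pose beta := c' N.
have nb : beta != 0.
  apply/eqP => hb; apply: nsp; exists c'.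
  by rewrite hc' big_ord_recr /= -/beta hb scale0r addr0.
pose r := c N / beta.
have cc := central_comb r cf cp Iz Jz nz.
have hs' : spanb b N ((fun x => f x - r *: (p N).2 x) z0).
  exists (fun i => c i - r * c' i); rewrite /= hc hc' !big_ord_recr /=.
  have rb : r * c' N = c N by rewrite /r divfK.
  rewrite scalerDr scalerA rb opprD addrACA subrr addr0 scaler_sumr -sumrB.
  by apply: eq_bigr => i _; rewrite scalerA scalerBl.
have [d hd] := IH _ _ cc (conj Iz Jz) hs'.
exists (fun i => if (i < N)%N then d i else r) => x Ix hx.
rewrite big_ord_recr /= ltnn.
have /= e := hd x (conj Ix (hx N (ltnSn N))) (fun i hi => hx i (ltnW hi)).
have -> : f x = (f x - r *: (p N).2 x) + r *: (p N).2 x by rewrite subrK.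
rewrite e; congr (_ + _); apply: eq_bigr => i _; by rewrite ltn_ord.
Qed.
End S.

Section S.
Variables (k : fieldType) (A : algType k).

Lemma exists_z : just_infinite A -> ~ satisfies_PI A ->
  exists z : nat -> A, (forall n, z n != 0) /\
    forall I f, central_pair I f -> exists n, I (z n).
Proof.
move=> ji nPI.
have [a ha] := choice_fun (fun n => nonPI_alt (n.+1) nPI).
exists (fun n => alt (fun i : 'I_n.+1 => a n (val i))); split => // I f [iI nI _ _ _].
have [s hs] := ji.2 I iI nI.
exists (size s); exact: (alt_codim _ iI hs (ltnSn _)).
Qed.

Lemma sum_if (m e : nat) (d : k) (G : nat -> A) : (e < m)%N ->
  \sum_(j < m) (if j == e :> nat then d else 0) *: G j = d *: G e.
Proof.
move=> he; rewrite (bigD1 (Ordinal he)) //= eqxx big1 ?addr0 //.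
move=> j /eqP hj; have -> : (j == e :> nat) = false.
  by apply/eqP => ej; apply: hj; apply: val_inj.
by rewrite scale0r.
Qed.

End S.

Theorem proposition6p2 (k : fieldType) (A : algType k) :
  just_infinite A -> countably_generated A -> ~ satisfies_PI A ->
  extended_center_countable_dim A.
Proof.
move=> ji [gen hgen] nPI.
pose b := fun j => eval_word gen (wdec j).
have hall := all_Sb hgen.
have [z [hz0 hzI]] := exists_z ji nPI.
have [a0 na0] : exists a : A, a != 0.
  apply: NNPP => h; apply: ji.1; exists [::] => a; exists (fun _ => 0).
  rewrite big_ord0; case: (eqVneq a 0) => // H; case: h; by exists a.
pose dp : (A -> Prop) * (A -> A) := (fun _ => True, fun x => x).
have cdp : central_pair dp.1 dp.2.
  by split; [split | exists a0 | | | ].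
have hP n : exists p : nat -> (A -> Prop) * (A -> A), forall i,
    central_pair (p i).1 (p i).2 /\
     ((exists q, central_pair q.1 q.2 /\ Pgood b (z n) i q) -> Pgood b (z n) i (p i)).
  apply: (@choice_fun nat ((A -> Prop) * (A -> A)) (fun i q => central_pair q.1 q.2 /\
     ((exists q, central_pair q.1 q.2 /\ Pgood b (z n) i q) -> Pgood b (z n) i q))) => i.
  case: (classic (exists q, central_pair q.1 q.2 /\ Pgood b (z n) i q)) => [[q [cq gq]]|nq].
    by exists q.
  by exists dp; split => // h; case: nq.
have [PP hPP] := choice_fun hP.
pose J j := if @unpickle (nat * nat)%type j is Some (n, i) then (PP n i).1 else dp.1.
pose g j := if @unpickle (nat * nat)%type j is Some (n, i) then (PP n i).2 else dp.2.
have hJ n i : J (pickle (n, i)) = (PP n i).1 by rewrite /J pickleK.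
have hg n i : g (pickle (n, i)) = (PP n i).2 by rewrite /g pickleK.
exists J, g; split.
  move=> j; rewrite /J /g; case: unpickle => [[n i]|] //.
  by case: (hPP n i).
move=> I f cf.
have [n In] := hzI I f cf.
have [N hN] := hall (f (z n)).
have [d hd] := ech ji (hz0 n) (hPP n) cf In hN.
pose m := (\max_(i < N) (pickle (n, val i)).+1)%N.
have hm i : (i < N)%N -> (pickle (n, i) < m)%N.
  by move=> hi; apply: (leq_bigmax (F := fun i : 'I_N => (pickle (n, val i)).+1) (Ordinal hi)).
exists m, (fun j => \sum_(i < N) (if j == pickle (n, val i) then d i else 0)).
move=> x Ix hx.
rewrite hd //; last by move=> i hi; rewrite -hJ; apply: hx; apply: hm.
symmetry; under eq_bigr do rewrite scaler_suml.
rewrite exchange_big /=; apply: eq_bigr => i _.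
rewrite (@sum_if _ _ m (pickle (n, val i)) (d i) (fun j => g j x)); first by rewrite /g pickleK. apply: hm; exact: ltn_ord.
Qed.
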